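(* Let $p$ be an odd prime, $\ell\geq1$, $k\geq1$. Then $|\mathcal{C}_{k+1}((\mathbb{Z}/p^\ell\mathbb{Z})^2)|\approx (p^\ell)^{2k-1}$. More precisely, the good $(k+1)$-point configurations in $(\mathbb{Z}/p^\ell\mathbb{Z})^2$ determine $\approx(p^\ell)^{2k-1}$ equivalence classes, and the bad configurations determine $o((p^\ell)^{2k-1})$ equivalence classes.
   Context: For $R=\mathbb{Z}/p^\ell\mathbb{Z}$ and $x=(x_1,x_2),y=(y_1,y_2)\in R^2$, write $y^\perp=(y_2,-y_1)$, so $x\cdot y^\perp=x_1y_2-x_2y_1$. A $(k+1)$-point configuration is $x=(x^1,\dots,x^{k+1})\in(R^2)^{k+1}$; it is good if $x^i\cdot x^{j\perp}$ is a unit for some $i,j$, and bad otherwise. Two configurations $x,y$ are equivalent iff $x^i\cdot x^{j\perp}=y^i\cdot y^{j\perp}$ for all pairs $i,j$; $\mathcal{C}_{k+1}(R^2)$ is the set of equivalence classes (and goodness/badness is constant on classes). $X\approx Y$ means $C^{-1}Y\leq X\leq CY$ with $C$ independent of $p$ and $\ell$ (possibly depending on $k$); $o(Y)$ denotes a quantity whose ratio to $Y$ tends to $0$ as $p\to\infty$. *)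

(* Defs.v *)
From HB Require Import structures.
From mathcomp Require Import all_boot all_order all_algebra.
Set Implicit Arguments. Unset Strict Implicit. Unset Printing Implicit Defensive.
Import Order.TTheory GRing.Theory Num.Theory.
Local Open Scope ring_scope.

Definition pt (n : nat) : finType := ('Z_n * 'Z_n)%type.

Definition dotperp (n : nat) (x y : pt n) : 'Z_n := x.1 * y.2 - x.2 * y.1.

Definition config (n k : nat) : finType := {ffun 'I_k.+1 -> pt n}.

Definition good (n k : nat) (x : config n k) : bool :=
  [exists i : 'I_k.+1, exists j : 'I_k.+1, dotperp (x i) (x j) \is a GRing.unit].

Definition bad (n k : nat) (x : config n k) : bool := ~~ good x.

Definition cequiv (n k : nat) : rel (config n k) :=
  fun x y => [forall i : 'I_k.+1, forall j : 'I_k.+1,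
                dotperp (x i) (x j) == dotperp (y i) (y j)].

Definition classes (n k : nat) : {set {set config n k}} :=
  equivalence_partition (@cequiv n k) [set: config n k].

Definition good_classes (n k : nat) : {set {set config n k}} :=
  equivalence_partition (@cequiv n k) [set x | good x].
Definition bad_classes (n k : nat) : {set {set config n k}} :=
  equivalence_partition (@cequiv n k) [set x | bad x].

(* Main.v *)
Require Import Defs.
From HB Require Import structures.
From mathcomp Require Import all_boot all_order all_algebra.
From mathcomp Require Import ring lra zify.
Set Implicit Arguments. Unset Strict Implicit. Unset Printing Implicit Defensive.
Import Order.TTheory GRing.Theory Num.Theory.
Local Open Scope ring_scope.

Definition Dm (n k : nat) (x : config n k) : {ffun 'I_k.+1 * 'I_k.+1 -> 'Z_n} :=
  [ffun ij => dotperp (x ij.1) (x ij.2)].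

Lemma cequivE n k (x y : config n k) : cequiv x y = (Dm x == Dm y).
Proof.
apply/forallP/eqP => [H|H].
  apply/ffunP => -[i j]; rewrite !ffunE /=; exact/eqP/(forallP (H i) j).
move=> i; apply/forallP => j; apply/eqP.
by have := congr1 (fun f : {ffun _ -> _} => f (i, j)) H; rewrite !ffunE.
Qed.

Lemma card_eqpart n k (A : {set config n k}) :
  #|equivalence_partition (@cequiv n k) A| = #|@Dm n k @: A|.
Proof.
have -> : equivalence_partition (@cequiv n k) A =
  (fun d => [set y in A | Dm y == d]) @: (@Dm n k @: A).
  rewrite -imset_comp; apply: eq_imset => x /=.
  by apply/setP => y; rewrite !inE cequivE eq_sym.
apply: card_in_imset => d1 d2 /imsetP[x Ax ->] /imsetP[y Ay ->] E.
have : x \in [set z in A | Dm z == Dm x] by rewrite inE Ax eqxx.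
by rewrite E inE => /andP[_ /eqP].
Qed.

Section Zq.
Variables (p l q : nat).
Hypothesis pp : prime p.
Hypothesis l0 : (0 < l)%N.
Hypothesis qE : q = (p ^ l)%N.

Lemma q_gt1 : (1 < q)%N.
Proof. by rewrite qE -(expn0 p) ltn_exp2l ?prime_gt1. Qed.

Lemma unitZqE (z : 'Z_q) : (z \is a GRing.unit) = ~~ (p %| z)%N.
Proof.
rewrite -{1}(natr_Zp z) unitZpE ?q_gt1 //.
by move: (z : nat) => zz; rewrite qE coprime_pexpl // prime_coprime.
Qed.

Definition divp (z : 'Z_q) : 'Z_q := ((z : nat) %/ p)%:R.

Lemma divpK (z : 'Z_q) : (p %| z)%N -> z = p%:R * divp z.
Proof.
move=> H; rewrite /divp -natrM mulnC divnK //; exact: (esym (natr_Zp z)).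
Qed.

Lemma nonunit_div (z : 'Z_q) : z \isn't a GRing.unit -> z = p%:R * divp z.
Proof. by rewrite unitZqE negbK; apply: divpK. Qed.

Definition swp (x : pt q) : pt q := (x.2, - x.1).

Lemma dot_swp (x y : pt q) : dotperp (swp x) (swp y) = dotperp x y.
Proof. rewrite /dotperp /swp /=; ring. Qed.

Lemma bad_aux k (x : config q k) i0 :
  (x i0).1 \is a GRing.unit ->
  (forall i j, dotperp (x i) (x j) \isn't a GRing.unit) ->
  exists a c : 'I_k.+1 -> 'Z_q, forall i j,
    dotperp (x i) (x j) = p%:R * (a i * c j - c i * a j).
Proof.
move=> Hu Hb.
set al := (x i0).1.
exists (fun i => (x i).1), (fun i => divp (dotperp (x i0) (x i)) * al^-1) => i j.
have Ei := nonunit_div (Hb i0 i); have Ej := nonunit_div (Hb i0 j).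
set wi := divp _ in Ei *; set wj := divp _ in Ej *.
transitivity (((x i).1 * (p%:R * wj) - (p%:R * wi) * (x j).1) * al^-1); last by ring.
rewrite -Ei -Ej /dotperp -/al.
transitivity ((al * al^-1) * ((x i).1 * (x j).2 - (x i).2 * (x j).1)).
  by rewrite mulrV // mul1r.
rewrite /al; ring.
Qed.

Lemma bad_form k (x : config q k) : bad x ->
  exists a c : 'I_k.+1 -> 'Z_q, forall i j,
    dotperp (x i) (x j) = p%:R * (a i * c j - c i * a j).
Proof.
move=> Hbad.
have Hb : forall i j, dotperp (x i) (x j) \isn't a GRing.unit.
  move=> i j; apply/negP => U; move/negP: Hbad; apply.
  by apply/existsP; exists i; apply/existsP; exists j.
case: (pickP (fun i => (x i).1 \is a GRing.unit)) => [i0 Hi0|N1].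
  exact: bad_aux Hi0 Hb.
case: (pickP (fun i => (x i).2 \is a GRing.unit)) => [i0 Hi0|N2].
  pose x' : config q k := [ffun i => swp (x i)].
  have := @bad_aux k x' i0; rewrite ffunE => /(_ Hi0).
  case=> [i j|a [c H]]; first by rewrite !ffunE dot_swp.
  by exists a, c => i j; rewrite -H !ffunE dot_swp.
exists (fun i => (x i).1), (fun i => divp (x i).2) => i j.
have Ej := nonunit_div (negbT (N2 j)); have Ei := nonunit_div (negbT (N2 i)).
rewrite /dotperp [in LHS]Ej [in LHS]Ei; ring.
Qed.
End Zq.

Section Red.
Variables (n m : nat).
Hypotheses (n1 : (1 < n)%N) (m1 : (1 < m)%N) (mn : (m %| n)%N).

Definition red (z : 'Z_n) : 'Z_m := (z : nat)%:R.

Lemma red_nat k : red k%:R = k%:R.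
Proof. by rewrite /red val_Zp_nat // -(Zp_nat_mod m1) modn_dvdm // Zp_nat_mod. Qed.

Lemma redM a b : red (a * b) = red a * red b.
Proof. by rewrite -(natr_Zp a) -(natr_Zp b) -natrM !red_nat natrM. Qed.

Lemma redD a b : red (a + b) = red a + red b.
Proof. by rewrite -(natr_Zp a) -(natr_Zp b) -natrD !red_nat natrD. Qed.

Lemma red0 : red 0 = 0.
Proof. by rewrite -(natr_Zp 0) red_nat. Qed.

Lemma redN a : red (- a) = - red a.
Proof. by apply/eqP; rewrite -subr_eq0 opprK -redD addNr red0. Qed.

Lemma redB a b : red (a - b) = red a - red b.
Proof. by rewrite redD redN. Qed.
End Red.

Lemma lift_red p m (w : 'Z_(p * m)) : (1 < m)%N -> (0 < p)%N ->
  p%:R * w = p%:R * (((red m w) : nat)%:R : 'Z_(p * m)).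
Proof.
move=> m1 p0.
have n1 : (1 < p * m)%N by rewrite (leq_trans m1) // leq_pmull.
rewrite val_Zp_nat // -natrM muln_modr Zp_nat_mod // natrM natr_Zp //.
Qed.

Lemma bad_card_succ p l k : prime p -> (0 < l)%N ->
  (#|@Dm (p * p ^ l) k @: [set x | bad x]| <= #|@Dm (p ^ l) k @: setT|)%N.
Proof.
move=> pp l0.
have m1 : (1 < p ^ l)%N by apply: (q_gt1 pp l0).
have n1 : (1 < p * p ^ l)%N by rewrite (leq_trans m1) // leq_pmull ?prime_gt0.
have mn : (p ^ l %| p * p ^ l)%N by apply: dvdn_mull.
pose F (d : {ffun 'I_k.+1 * 'I_k.+1 -> 'Z_(p ^ l)}) : {ffun 'I_k.+1 * 'I_k.+1 -> 'Z_(p * p ^ l)} :=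
  [ffun ij => p%:R * (((d ij) : nat)%:R)].
apply: leq_trans (leq_imset_card F _); apply: subset_leq_card.
apply/subsetP => _ /imsetP[x Hx ->]; rewrite inE in Hx.
have qE : (p * p ^ l = p ^ l.+1)%N by rewrite expnS.
have [a [c H]] := bad_form pp (ltn0Sn l) qE Hx.
pose y : config (p ^ l) k := [ffun i => (red (p ^ l) (a i), red (p ^ l) (c i))].
apply/imsetP; exists (Dm y); first by apply: imset_f; rewrite inE.
apply/ffunP => -[i j]; rewrite !ffunE /= H (lift_red _ m1) ?prime_gt0 //.
by rewrite redB ?redM // /dotperp !ffunE.
Qed.

Lemma bad_card_one p k : prime p ->
  (#|@Dm p k @: [set x | bad x]| <= 1)%N.
Proof.
move=> pp; rewrite -(cards1 (0 : {ffun 'I_k.+1 * 'I_k.+1 -> 'Z_p})).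
apply: subset_leq_card; apply/subsetP => _ /imsetP[x Hx ->]; rewrite inE in Hx.
have [a [c H]] := bad_form pp (ltn0Sn 0) (esym (expn1 p)) Hx.
rewrite inE; apply/eqP/ffunP => -[i j]; rewrite !ffunE /= H.
by rewrite pchar_Zp ?prime_gt1 // mul0r.
Qed.

Lemma card_big_setU (I : Type) (T : finType) (r : seq I) (P : {pred I})
    (F : I -> {set T}) :
  (#|\bigcup_(i <- r | P i)  F i| <= \sum_(i <- r | P i) #|F i|)%N.
Proof.
elim/big_ind2 : _ => // [|m A n B Am Bn]; first by rewrite cards0.
by rewrite (leq_trans (leq_card_setU _ _))// leq_add.
Qed.

Section Good.
Variables (n k : nat).
Hypothesis n1 : (1 < n)%N.

Definition Yc (i j : 'I_k.+1) (u : 'Z_n) (z : config n k) : config n k :=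
  [ffun m => if m == i then (1, 0) else if m == j then (0, u) else z m].

Definition Dom (i j : 'I_k.+1) : {set config n k} :=
  [set z : config n k | z \in pffun_on ((0 : 'Z_n), (0 : 'Z_n)) (~: [set i; j]) predT].

Lemma Dom0 i j z : z \in Dom i j -> z i = (0, 0) /\ z j = (0, 0).
Proof.
rewrite inE => /pffun_onP[/supportP S _].
by split; apply: S; rewrite !inE eqxx ?orbT.
Qed.

Lemma card_pt : #|pt n| = (n * n)%N.
Proof. by rewrite card_prod card_ord Zp_cast. Qed.

Lemma card_Dom i j : i != j -> #|Dom i j| = ((n * n) ^ (k.+1 - 2))%N.
Proof.
move=> ij; rewrite cardsE card_pffun_on.
have -> : #|~: [set i; j]| = (k.+1 - 2)%N by rewrite cardsCs setCK card_ord cards2 ij.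

by rewrite (eq_card (B := pt n)) // card_pt.
Qed.

Lemma dot_inv (al be ga de a1 a2 b1 b2 : 'Z_n) :
  (al * de - be * ga) \is a GRing.unit ->
  let u := al * de - be * ga in
  let g (v : pt n) : pt n := ((de * v.1 - ga * v.2) * u^-1, - be * v.1 + al * v.2) in
  dotperp (g (a1, a2)) (g (b1, b2)) = dotperp (a1, a2) (b1, b2).
Proof.
move=> U u g; rewrite /dotperp /g /=.
transitivity ((u * u^-1) * (a1 * b2 - a2 * b1)); last by rewrite mulrV // mul1r.
rewrite /u; ring.
Qed.

Lemma good_cover (x : config n k) : good x ->
  exists i j, i != j /\ exists2 z, z \in Dom i j & Dm x = Dm (Yc i j (dotperp (x i) (x j)) z).
Proof.
case/existsP => i /existsP[j U].
have ij : i != j.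
  apply: contraTneq U => ->; rewrite /dotperp mulrC subrr unitr0 //.
exists i, j; split => //.
set al := (x i).1; set be := (x i).2; set ga := (x j).1; set de := (x j).2.
have uE : dotperp (x i) (x j) = al * de - be * ga by [].
rewrite uE in U *.
set u := al * de - be * ga.
pose g (v : pt n) : pt n := ((de * v.1 - ga * v.2) * u^-1, - be * v.1 + al * v.2).
exists [ffun m => if (m == i) || (m == j) then (0, 0) else g (x m)].
  rewrite inE; apply/pffun_onP; split => //.
  apply/supportP => m; rewrite !inE negbK => /orP[] /eqP->; rewrite ffunE eqxx ?orbT //.
have YE m : Yc i j u [ffun m => if (m == i) || (m == j) then (0, 0) else g (x m)] m = g (x m).
  rewrite !ffunE; have [->|mi] := eqP.
    rewrite /g -/al -/be; congr (_, _); last by ring.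
    by rewrite -(mulrV U) /u; ring.
  have [->|mj] := eqP; last by [].
  by rewrite /g -/ga -/de /u; congr (_, _); ring.
apply/ffunP => -[a b]; rewrite ffunE [RHS]ffunE /= !YE.
rewrite [x a]surjective_pairing [x b]surjective_pairing.
by rewrite (dot_inv _ _ _ _ U).
Qed.

Lemma good_upper :
  (#|@Dm n k @: [set x | good x]| <= (k.+1 * k.+1) * (n * (n * n) ^ (k.+1 - 2)))%N.
Proof.
pose A := [set ij : 'I_k.+1 * 'I_k.+1 | ij.1 != ij.2].
pose F (ij : 'I_k.+1 * 'I_k.+1) :=
  (fun uz : 'Z_n * config n k => Dm (Yc ij.1 ij.2 uz.1 uz.2)) @: setX setT (Dom ij.1 ij.2).
apply: (@leq_trans #|\bigcup_(ij in A) F ij|).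
  apply: subset_leq_card; apply/subsetP => _ /imsetP[x Hx ->]; rewrite inE in Hx.
  have [i [j [ij [z Hz E]]]] := good_cover Hx.
  apply/bigcupP; exists (i, j); first by rewrite inE.
  by rewrite E; apply/imsetP; exists (dotperp (x i) (x j), z); rewrite ?in_setX ?in_setT ?Hz.
apply: leq_trans (card_big_setU _ _ _) _.
apply: (@leq_trans (\sum_(ij in A) (n * (n * n) ^ (k.+1 - 2)))%N).
  apply: leq_sum => -[i j]; rewrite inE /= => ij.
  by apply: leq_trans (leq_imset_card _ _) _; rewrite cardsX cardsT card_ord Zp_cast // card_Dom.
rewrite sum_nat_const leq_mul2r; apply/orP; right.
by apply: leq_trans (max_card _) _; rewrite card_prod card_ord.
Qed.

Lemma card_units : #|[set u : 'Z_n | u \is a GRing.unit]| = totient n.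
Proof.
rewrite totient_count_coprime.
transitivity (\sum_(0 <= d < (Zp_trunc n).+2) coprime n d)%N; last by rewrite Zp_cast.
rewrite big_mkord cardsE -sum1_card.
rewrite big_mkcond /=; apply: eq_bigr => u _.
by rewrite -{1}(natr_Zp u) unitZpE //; case: (coprime _ _).
Qed.

Lemma good_lower (i j : 'I_k.+1) : i != j ->
  (totient n * (n * n) ^ (k.+1 - 2) <= #|@Dm n k @: [set x | good x]|)%N.
Proof.
move=> ij.
rewrite -card_units -(card_Dom ij) -cardsX.
pose f (uz : 'Z_n * config n k) := Dm (Yc i j uz.1 uz.2).
rewrite -(@card_in_imset _ _ f); last first.
  move=> [u1 z1] [u2 z2]; rewrite !in_setX /= => /andP[U1 H1] /andP[U2 H2] E.
  rewrite inE in U1.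
  have Ev a b := congr1 (fun f : {ffun _ -> _} => f (a, b)) E.
  have ji : (j == i) = false by apply/negbTE; rewrite eq_sym.
  have Eu : u1 = u2.
    have := Ev i j; rewrite /f !ffunE /= !eqxx ji /dotperp /=.
    by rewrite !mul1r ?mulr0 ?mul0r !subr0.
  subst u2; congr (_, _); apply/ffunP => m.
  have [D1i D1j] := Dom0 H1; have [D2i D2j] := Dom0 H2.
  have [->|mi] := eqVneq m i; first by rewrite D1i D2i.
  have [->|mj] := eqVneq m j; first by rewrite D1j D2j.
  have := Ev i m; have := Ev j m.
  rewrite /f !ffunE /= !eqxx ji (negbTE mi) (negbTE mj) /dotperp /=.
  set a := (z1 m).1; set b := (z2 m).1; set c := (z1 m).2; set d := (z2 m).2.
  move=> e1 e2.
  have h1 : a = b.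
    apply: (mulrI U1).
    transitivity (- (0 * c - u1 * a)); first by ring.
    by rewrite e1; ring.
  have h2 : c = d.
    transitivity (1 * c - 0 * a); first by ring.
    by rewrite e2; ring.
  by rewrite [z1 m]surjective_pairing [z2 m]surjective_pairing -/a -/b -/c -/d h1 h2.
apply: subset_leq_card; apply/subsetP => _ /imsetP[[u z] H ->].
move: H; rewrite in_setX !inE /= => /andP[U _].
apply/imsetP; exists (Yc i j u z) => //; rewrite inE.
apply/existsP; exists i; apply/existsP; exists j.
have ji : (j == i) = false by apply/negbTE; rewrite eq_sym.
rewrite /dotperp !ffunE !eqxx ji /=.
by rewrite (_ : _ - _ = u) //; ring.
Qed.
End Good.

Section Final.
Variable k : nat.
Hypothesis hk : (1 <= k)%N.

Local Notation A n := #|@Dm n k @: [set: config n k]|.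
Local Notation G n := #|@Dm n k @: [set x | good x]|.
Local Notation B n := #|@Dm n k @: [set x | bad x]|.
Local Notation K := (k.+1 * k.+1)%N.
Local Notation N := (2 * k - 1)%N.

Lemma powE n : (n * (n * n) ^ (k.+1 - 2))%N = (n ^ N)%N.
Proof.
case: k hk => // k' _.
rewrite (_ : (k'.+2 - 2 = k')%N) ?subn2 // (_ : (2 * k'.+1 - 1 = (2 * k').+1)%N); last lia.
by rewrite expnS expnM mulnn.
Qed.

Lemma allU n : (A n <= G n + B n)%N.
Proof.
have -> : [set: config n k] = [set x | good x] :|: [set x | bad x].
  by apply/setP => x; rewrite !inE /bad orbN.
by rewrite imsetU; apply: leq_card_setU.
Qed.

Lemma Gup n : (1 < n)%N -> (G n <= K * n ^ N)%N.
Proof. by move=> n1; rewrite -powE; apply: good_upper. Qed.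

Lemma Glow p l : prime p -> odd p -> (0 < l)%N -> (2 * (p ^ l) ^ N <= 3 * G (p ^ l))%N.
Proof.
move=> pp op l0.
have n1 : (1 < p ^ l)%N by apply: (q_gt1 pp l0).
have ij : (ord0 : 'I_k.+1) != ord_max by rewrite -(inj_eq val_inj) /= eq_sym -lt0n.
have := good_lower n1 ij; rewrite totient_pfactor //.
have p3 : (3 <= p)%N.
  have := prime_gt1 pp; by case: p op {pp n1} => [|[|[|]]].
rewrite -powE.
clear n1; case: l l0 => // l _.
set Z := ((p ^ l.+1 * p ^ l.+1) ^ _)%N; set g := #|_|.
rewrite expnS /= -mulnA; set W := (p ^ l * Z)%N.
have h : (2 * p <= 3 * p.-1)%N by case: p p3 {pp op ij g W Z} => //= p' p3; lia.
rewrite -mulnA -/W => H.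
apply: leq_trans (_ : 3 * (p.-1 * W) <= 3 * g)%N; last by rewrite leq_mul2l H orbT.
by rewrite mulnA mulnA leq_mul2r h orbT.
Qed.

Lemma Aup p l : prime p -> odd p -> (0 < l)%N -> (A (p ^ l) <= 2 * K * (p ^ l) ^ N)%N.
Proof.
move=> pp op; elim: l => // l IH _.
have p3 : (3 <= p)%N.
  have := prime_gt1 pp; case: p op {pp IH} => [|[|[|]]] //.
have K1 : (1 <= K)%N by [].
have N1 : (1 <= N)%N by lia.
case: l IH => [_|l IH].
  apply: leq_trans (allU _) _.
  have := Gup (prime_gt1 pp); rewrite expn1 => HG.
  have := bad_card_one k pp => HB.
  have : (1 <= p ^ N)%N by rewrite expn_gt0 prime_gt0.
  move: HG HB; set Y := (p ^ N)%N; set g := G p; set b := B p; nia.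
have {}IH := IH erefl.
rewrite expnS; apply: leq_trans (allU _) _.
have HB := bad_card_succ k pp (ltn0Sn l).
have HG := Gup (q_gt1 pp (ltn0Sn l.+1) erefl); rewrite expnS in HG.
have HX : (3 * (p ^ l.+1) ^ N <= (p * p ^ l.+1) ^ N)%N.
  rewrite expnMn leq_mul2r; apply/orP; right.
  have : (p ^ 1 <= p ^ N)%N by rewrite leq_pexp2l ?(prime_gt0 pp).
  rewrite expn1; lia.
move: HB HG HX IH; set Y := ((p ^ l.+1) ^ N)%N; set X := ((p * p ^ l.+1) ^ N)%N.
set g := G _; set b := B _; set a := A _; nia.
Qed.

Lemma Bup p l : prime p -> odd p -> (0 < l)%N -> (p * B (p ^ l) <= 2 * K * (p ^ l) ^ N)%N.
Proof.
move=> pp op l0.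
have N1 : (1 <= N)%N by lia.
case: l l0 => // -[_|l _].
  have := bad_card_one k pp; rewrite expn1.
  have : (p <= p ^ N)%N by rewrite -{1}(expn1 p) leq_pexp2l ?(prime_gt0 pp).
  set b := B p; set Y := (p ^ N)%N; nia.
rewrite expnS.
have HB := bad_card_succ k pp (ltn0Sn l).
have HA := Aup pp op (ltn0Sn l).
have HX : (p * (p ^ l.+1) ^ N <= (p * p ^ l.+1) ^ N)%N.
  rewrite expnMn leq_mul2r; apply/orP; right.
  by rewrite -{1}(expn1 p) leq_pexp2l ?(prime_gt0 pp).
move: HB HA HX; set Y := ((p ^ l.+1) ^ N)%N; set X := ((p * p ^ l.+1) ^ N)%N.
set b := B _; set a := A _; nia.
Qed.
End Final.

Lemma rat_bounds (a y c : nat) : (0 < c)%N -> (y <= c * a)%N -> (a <= c * y)%N ->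
  ((c%:R : rat)^-1 * (y%:R : rat) <= (a%:R : rat) <= (c%:R : rat) * (y%:R : rat)).
Proof.
move=> c0 h1 h2; apply/andP; split.
  by rewrite ler_pdivrMl ?ltr0n // -natrM ler_nat.
by rewrite -natrM ler_nat.
Qed.

Unset Implicit Arguments.

Theorem theorem6p1 (k : nat) (hk : (1 <= k)%N) :
  (exists C : rat, 0 < C /\
    forall (p l : nat), prime p -> odd p -> (1 <= l)%N ->
      let Y : rat := ((p ^ l) ^ (2 * k - 1))%:R in
      (C^-1 * Y <= (#|classes (p ^ l) k|)%:R <= C * Y) /\
      (C^-1 * Y <= (#|good_classes (p ^ l) k|)%:R <= C * Y)) /\
  (forall eps : rat, 0 < eps ->
    exists P : nat, forall (p l : nat), prime p -> odd p -> (P < p)%N -> (1 <= l)%N ->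
      (#|bad_classes (p ^ l) k|)%:R <= eps * ((p ^ l) ^ (2 * k - 1))%:R).
Proof.
have K0 : (0 < 2 * (k.+1 * k.+1))%N by [].
split.
  exists (2 * (k.+1 * k.+1))%:R; split; first by rewrite ltr0n.
  move=> p l pp op l1 Y.
  rewrite /classes /good_classes !card_eqpart.
  have HA := Aup hk pp op l1.
  have HG := Gup hk (q_gt1 pp l1 erefl).
  have HL := Glow hk pp op l1.
  have GA : (#|@Dm (p ^ l) k @: [set x | good x]| <= #|@Dm (p ^ l) k @: [set: config (p ^ l) k]|)%N.
    by apply/subset_leq_card/imsetS/subsetT.
  move: HA HG HL GA.
  set a := #|_ @: [set: _]|; set g := #|_ @: [set x | good x]|.
  set y := ((p ^ l) ^ _)%N; set K := (k.+1 * k.+1)%N => HA HG HL GA.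
  have K1 : (1 <= K)%N by [].
  split; apply: rat_bounds => //; nia.
move=> eps e0.
set C : rat := (2 * (k.+1 * k.+1))%:R.
exists (Num.bound (C / eps)) => p l pp op Pp l1.
rewrite /bad_classes card_eqpart.
have HB := Bup hk pp op l1.
have hp : C < p%:R * eps.
  rewrite -ltr_pdivrMr //.
  apply: lt_le_trans (archi_boundP _) _; first by rewrite divr_ge0 // ltW.
  by rewrite ler_nat ltnW.
move: HB; set b := #|_|; set y := ((p ^ l) ^ _)%N => HB.
have HB' : p%:R * b%:R <= C * y%:R :> rat by rewrite -!natrM ler_nat.
have p0 : 0 < p%:R :> rat by rewrite ltr0n prime_gt0.
have y0 : 0 <= y%:R :> rat by [].
nra.
Qed.
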